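(* Let $A$ be a complex evolution algebra which is not a non-zero trivial evolution algebra, with natural basis $B=\{e_i:i\in\Lambda\}$ and $e_j^2=\sum_i\omega_{ij}e_i$. Let $0\neq a=\sum_{i\in\Lambda_a}\alpha_ie_i\in A$, and set $B^0(a)=\{e_i:i\in\Lambda_a\}$ and $B^1(a)=\bigcup_{i\in\Lambda_a}\{e_j:\omega_{ji}\neq0\}$. Enumerate so that $B^0(a)=\{e_1,\dots,e_k\}$ and $B^0(a)\cup B^1(a)=\{e_1,\dots,e_k,e_{k+1},\dots,e_m\}$, and put $\alpha_{k+1}=\dots=\alpha_m=0$, $W_m=(\omega_{ij})_{i,j=1}^m$, $D=\mathrm{diag}(\alpha_1,\dots,\alpha_m)$. Then for $\lambda\in\mathbb{C}$: (i) $\lambda\in\sigma^A_m(a)$ if and only if $\lambda=0$ or $\lambda$ is an eigenvalue of $W_mD$; (ii) $\lambda\in\sigma^A(a)$ if and only if $\lambda=0$ or the system $(W_mD-\lambda I_m)\beta=(\alpha_1,\dots,\alpha_m)^T$ has no solution $\beta\in\mathbb{C}^m$ (in which case $\lambda\in\sigma^A_m(a)$).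
   Context: An evolution algebra is an algebra with a basis $\{e_i:i\in\Lambda\}$ (natural basis) with $e_ie_j=0$ for $i\neq j$; each $e_j^2$ has finitely many nonzero coefficients. A non-zero trivial evolution algebra has a natural basis with $e_i^2=\omega_{ii}e_i$, $\omega_{ii}\neq0$ for all $i$. Support $\Lambda_a=\{i:\alpha_i\neq0\}$. For a complex algebra $A$: if $A$ has a unit $e$ put $\tilde A=A$, else $\tilde A=A\oplus\mathbb{C}\mathbf1$ is the unitization with product $(a+\lambda\mathbf1)(b+\mu\mathbf1)=ab+\lambda b+\mu a+\lambda\mu\mathbf1$ and $e=\mathbf1$. $x\in\tilde A$ is invertible if it has a left and a right inverse, and m-invertible if $L_x(y)=xy$ and $R_x(y)=yx$ are bijective on $\tilde A$. $\sigma^A(a)=\{\lambda:a-\lambda e\text{ not invertible in }\tilde A\}$ and $\sigma^A_m(a)=\{\lambda:a-\lambda e\text{ not m-invertible in }\tilde A\}$. *)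

(* Defs.v *)
From HB Require Import structures.
From mathcomp Require Import all_boot all_order all_algebra.
Set Implicit Arguments. Unset Strict Implicit. Unset Printing Implicit Defensive.
Import Order.TTheory GRing.Theory Num.Theory.
Local Open Scope ring_scope.

Section EvolutionAlgebras.
Variables (F : numClosedFieldType) (A : lmodType F).

Definition bilinear_prod (mul : A -> A -> A) : Prop :=
  (forall (c : F) (x y z : A), mul (c *: x + y) z = c *: mul x z + mul y z) /\
  (forall (c : F) (x y z : A), mul z (c *: x + y) = c *: mul z x + mul z y).

Definition natural_basis (mul : A -> A -> A) (I : eqType) (e : I -> A)
    (coord : A -> I -> F) : Prop :=
  [/\ (forall (c : F) (x y : A) (i : I),
         coord (c *: x + y) i = c * coord x i + coord y i),
      (forall i j : I, coord (e j) i = (i == j)%:R),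
      (forall x : A, exists s : seq I,
         [/\ uniq s, (forall i, coord x i != 0 -> i \in s)
           & x = \sum_(i <- s) coord x i *: e i])
    & (forall i j : I, i != j -> mul (e i) (e j) = 0)].

Definition nonzero_trivial_evolution (mul : A -> A -> A) : Prop :=
  (exists x : A, x != 0) /\
  exists (I : eqType) (e : I -> A) (coord : A -> I -> F),
    natural_basis mul e coord /\
    forall i : I, exists w : F, w != 0 /\ mul (e i) (e i) = w *: e i.

Definition is_unit_of (T : Type) (mul : T -> T -> T) (u : T) : Prop :=
  forall x, mul u x = x /\ mul x u = x.

Definition invertible_in (T : Type) (mul : T -> T -> T) (u x : T) : Prop :=
  (exists y, mul y x = u) /\ (exists z, mul x z = u).

Definition m_invertible_in (T : Type) (mul : T -> T -> T) (x : T) : Prop :=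
  bijective (mul x) /\ bijective (fun y => mul y x).

Definition unitz_mul (mul : A -> A -> A) (x y : A * F) : A * F :=
  (mul x.1 y.1 + x.2 *: y.1 + y.2 *: x.1, x.2 * y.2).

(* lam \in sigma^A(a): if A has a unit u, a - lam u is not invertible in A;
   otherwise a - lam 1 = (a, -lam) is not invertible in the unitization. *)
Definition spectrum (mul : A -> A -> A) (a : A) (lam : F) : Prop :=
  (exists u, is_unit_of mul u /\ ~ invertible_in mul u (a - lam *: u)) \/
  ((forall u, ~ is_unit_of mul u) /\
   ~ invertible_in (unitz_mul mul) (0, 1) (a, - lam)).

Definition m_spectrum (mul : A -> A -> A) (a : A) (lam : F) : Prop :=
  (exists u, is_unit_of mul u /\ ~ m_invertible_in mul (a - lam *: u)) \/
  ((forall u, ~ is_unit_of mul u) /\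
   ~ m_invertible_in (unitz_mul mul) (a, - lam)).

Definition Wmat (mul : A -> A -> A) (I : eqType) (e : I -> A)
    (coord : A -> I -> F) (m : nat) (idx : 'I_m -> I) : 'M[F]_m :=
  \matrix_(i, j) coord (mul (e (idx j)) (e (idx j))) (idx i).

Definition Dmat (I : eqType) (coord : A -> I -> F) (a : A) (m : nat)
    (idx : 'I_m -> I) : 'M[F]_m :=
  diag_mx (\row_j coord a (idx j)).

Definition alpha_col (I : eqType) (coord : A -> I -> F) (a : A) (m : nat)
    (idx : 'I_m -> I) : 'cV[F]_m :=
  \col_i coord a (idx i).

End EvolutionAlgebras.

(* Main.v *)
Require Import Defs.
From HB Require Import structures.
From mathcomp Require Import all_boot all_order all_algebra.
From mathcomp Require Import ring.
Import Order.TTheory GRing.Theory Num.Theory.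
Local Open Scope ring_scope.
Set Implicit Arguments. Unset Strict Implicit.

Lemma lin0_ (F : numClosedFieldType) (A V : lmodType F) (f : A -> V)
  (H : forall c x y, f (c *: x + y) = c *: f x + f y) : f 0 = 0.
Proof.
have := H 1 0 0; rewrite !scale1r addr0 => h.
have : f 0 + f 0 = f 0 + 0 by rewrite addr0 -h.
by move/addrI.
Qed.

Lemma linD_ (F : numClosedFieldType) (A V : lmodType F) (f : A -> V)
  (H : forall c x y, f (c *: x + y) = c *: f x + f y) x y : f (x + y) = f x + f y.
Proof. by have := H 1 x y; rewrite !scale1r. Qed.

Lemma linZ_ (F : numClosedFieldType) (A V : lmodType F) (f : A -> V)
  (H : forall c x y, f (c *: x + y) = c *: f x + f y) c x : f (c *: x) = c *: f x.
Proof. by have := H c x 0; rewrite !addr0 (lin0_ H) addr0. Qed.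

Lemma linB_ (F : numClosedFieldType) (A V : lmodType F) (f : A -> V)
  (H : forall c x y, f (c *: x + y) = c *: f x + f y) x y : f (x - y) = f x - f y.
Proof. by rewrite (linD_ H) -scaleN1r (linZ_ H) scaleN1r. Qed.

Lemma lin_sum_ (F : numClosedFieldType) (A V : lmodType F) (f : A -> V)
  (H : forall c x y, f (c *: x + y) = c *: f x + f y) (I : Type) (r : seq I)
  (P : pred I) (G : I -> A) :
  f (\sum_(i <- r | P i) G i) = \sum_(i <- r | P i) f (G i).
Proof. exact: (big_morph f (linD_ H) (lin0_ H)). Qed.

Lemma sum_seq_eq (I : eqType) (V : nmodType) (f : I -> V) (s1 s2 : seq I) :
  uniq s1 -> uniq s2 -> (forall i, f i != 0 -> (i \in s1) && (i \in s2)) ->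
  \sum_(i <- s1) f i = \sum_(i <- s2) f i.
Proof.
move=> u1 u2 h.
have Z1 : \sum_(i <- s1 | i \notin s2) f i = 0.
  apply: big1 => i /negbTE hi; case: (f i =P 0) => [//|] /eqP /h /andP[_].
  by rewrite hi.
have Z2 : \sum_(i <- s2 | i \notin s1) f i = 0.
  apply: big1 => i /negbTE hi; case: (f i =P 0) => [//|] /eqP /h /andP[].
  by rewrite hi.
rewrite (bigID (mem s2)) /= Z1 addr0 [RHS](bigID (mem s1)) /= Z2 addr0.
rewrite -[LHS]big_filter -[RHS]big_filter; apply: perm_big.
apply: uniq_perm; rewrite ?filter_uniq //.
by move=> i; rewrite !mem_filter andbC.
Qed.

Unset Implicit Arguments. Set Strict Implicit.
Theorem proposition5p5 (F : numClosedFieldType) (A : lmodType F)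
  (mul : A -> A -> A) (Hbil : bilinear_prod mul)
  (L : eqType) (e : L -> A) (coord : A -> L -> F)
  (Hbasis : natural_basis mul e coord)
  (Hnt : ~ nonzero_trivial_evolution mul)
  (a : A) (Ha : a != 0)
  (k m : nat) (idx : 'I_m -> L) (Hidx : injective idx) (Hkm : (k <= m)%N)
  (HB0 : forall l : L, coord a l != 0 <-> exists j : 'I_m, (j < k)%N /\ idx j = l)
  (HB01 : forall l : L,
     (coord a l != 0 \/
      exists i : L, coord a i != 0 /\ coord (mul (e i) (e i)) l != 0)
     <-> exists j : 'I_m, idx j = l) :
  forall lam : F,
    (m_spectrum mul a lam <->
       lam = 0 \/
       eigenvalue (Wmat mul e coord idx *m Dmat coord a idx) lam) /\
    (spectrum mul a lam <->
       lam = 0 \/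
       ~ (exists beta : 'cV[F]_m,
            (Wmat mul e coord idx *m Dmat coord a idx - lam%:M) *m beta
              = alpha_col coord a idx)) /\
    (spectrum mul a lam -> m_spectrum mul a lam).
Proof.
move=> lam.
case: Hbasis => Hc He Hexp Horth; case: Hbil => Hl Hr.
pose sq i := mul (e i) (e i).
have Hci : forall i, forall c x y, (fun x => coord x i : F^o) (c *: x + y)
   = c *: (fun x => coord x i : F^o) x + (fun x => coord x i : F^o) y.
  by move=> i c x y; rewrite Hc.
have cD : forall i x y, coord (x + y) i = coord x i + coord y i :=
  fun i => linD_ (Hci i).
have cZ : forall i c x, coord (c *: x) i = c * coord x i := fun i => linZ_ (Hci i).
have cB : forall i x y, coord (x - y) i = coord x i - coord y i :=
  fun i => linB_ (Hci i).
have c0 : forall i, coord 0 i = 0 := fun i => lin0_ (Hci i).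
have csum : forall i (I : Type) (r : seq I) (P : pred I) (G : I -> A),
  coord (\sum_(j <- r | P j) G j) i = \sum_(j <- r | P j) coord (G j) i :=
  fun i => lin_sum_ (Hci i).
have Hlz : forall z, forall c x y, (fun x => mul x z) (c *: x + y)
   = c *: (fun x => mul x z) x + (fun x => mul x z) y.
  by move=> z c x y; rewrite Hl.
have Hrz : forall z, forall c x y, (mul z) (c *: x + y) = c *: mul z x + mul z y.
  by move=> z c x y; rewrite Hr.
have mlZ : forall z c x, mul (c *: x) z = c *: mul x z := fun z => linZ_ (Hlz z).
have mlsum : forall z (I : Type) (r : seq I) (P : pred I) (G : I -> A),
  mul (\sum_(i <- r | P i) G i) z = \sum_(i <- r | P i) mul (G i) z :=
  fun z => lin_sum_ (Hlz z).
have mrZ : forall z c x, mul z (c *: x) = c *: mul z x := fun z => linZ_ (Hrz z).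
have mr0 : forall z, mul z 0 = 0 := fun z => lin0_ (Hrz z).
have mrB : forall z x y, mul z (x - y) = mul z x - mul z y := fun z => linB_ (Hrz z).
have mrsum : forall z (I : Type) (r : seq I) (P : pred I) (G : I -> A),
  mul z (\sum_(i <- r | P i) G i) = \sum_(i <- r | P i) mul z (G i) :=
  fun z => lin_sum_ (Hrz z).
have zeroP : forall x, (forall l, coord x l = 0) -> x = 0.
  move=> x h; have [s [_ _ ->]] := Hexp x.
  by rewrite big1 // => i _; rewrite h scale0r.
have eq_coord : forall x y, (forall l, coord x l = coord y l) -> x = y.
  move=> x y h; apply/eqP; rewrite -subr_eq0; apply/eqP; apply: zeroP => l.
  by rewrite cB h subrr.
have mul_ei : forall i y, mul (e i) y = coord y i *: sq i.
  move=> i y; have [t [ut st ey]] := Hexp y; rewrite {1}ey mrsum.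
  under eq_bigr => j _ do rewrite mrZ.
  case: (boolP (i \in t)) => it.
    rewrite (bigD1_seq i) //= big1 ?addr0 // => j ji.
    by rewrite Horth ?scaler0 // eq_sym.
  rewrite big1_seq.
    case: (coord y i =P 0) => [-> |/eqP /st]; first by rewrite scale0r.
    by rewrite (negbTE it).
  move=> j /andP[_ jt]; rewrite Horth ?scaler0 //.
  by apply: contraNneq it => ->.
have mul_exp : forall x y s, uniq s -> (forall i, coord x i != 0 -> i \in s) ->
    mul x y = \sum_(i <- s) (coord x i * coord y i) *: sq i.
  move=> x y s us ss; have [t [ut st ex]] := Hexp x.
  rewrite {1}ex mlsum.
  rewrite (eq_bigr (fun i => (coord x i * coord y i) *: sq i)); last first.
    by move=> i _; rewrite mlZ (mul_ei i y) scalerA.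
  apply: sum_seq_eq => // i; case: (coord x i =P 0) => [->|/eqP h _].
    by rewrite mul0r scale0r eqxx.
  by rewrite st // ss.
have mulC : forall x y, mul x y = mul y x.
  move=> x y; have [tx [ux sx _]] := Hexp x; have [ty [uy sy _]] := Hexp y.
  have us : uniq (undup (tx ++ ty)) by apply: undup_uniq.
  rewrite (mul_exp x y _ us) ?(mul_exp y x _ us).
    by apply: eq_bigr => i _; rewrite mulrC.
    by move=> i /sy; rewrite mem_undup mem_cat orbC => ->.
  by move=> i /sx; rewrite mem_undup mem_cat => ->.
have noUnit : forall u, ~ is_unit_of mul u.
  move=> u hu; apply: Hnt; split; first by exists a.
  exists L, e, coord; split; first by split.
  move=> i; have [_ h] := hu (e i); rewrite mul_ei in h.
  have cu : coord u i != 0.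
    apply/eqP => c0'; move: h; rewrite c0' scale0r => h.
    by have := He i i; rewrite -h c0 eqxx => /eqP; rewrite eq_sym pnatr_eq0.
  exists (coord u i)^-1; split; first by rewrite invr_eq0.
  by rewrite -[in RHS]h scalerA mulVf // scale1r.
pose ids := [seq idx j | j <- enum 'I_m].
have uids : uniq ids by rewrite map_inj_uniq // enum_uniq.
have mulaE : forall y, mul a y =
    \sum_(j < m) (coord a (idx j) * coord y (idx j)) *: sq (idx j).
  move=> y; rewrite (mul_exp a y ids uids); first by rewrite big_map big_enum.
  move=> l /HB0 [j [_ <-]]; apply: map_f; by rewrite mem_enum.
pose M := Wmat mul e coord idx *m Dmat coord a idx.
have ME : forall i j, M i j = coord (sq (idx j)) (idx i) * coord a (idx j).
  by move=> i j; rewrite /M /Dmat mul_mx_diag !mxE.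
pose yv (y : A) : 'cV[F]_m := \col_i coord y (idx i).
have C1 : forall y i, coord (mul a y) (idx i) = (M *m yv y) i 0.
  move=> y i; rewrite mulaE csum mxE; apply: eq_bigr => j _.
  rewrite cZ ME !mxE; ring.
have imgP : forall l, (exists j, idx j = l) \/ (forall j, idx j != l).
  move=> l; case: (boolP [exists j, idx j == l]).
    by move=> /existsP [j /eqP h]; left; exists j.
  by move=> /existsPn h; right.
have aout : forall l, (forall j, idx j != l) -> coord a l = 0.
  move=> l h; apply/eqP; apply: contraT => /HB0 [j [_ hj]].
  by have := h j; rewrite hj eqxx.
have C2 : forall y l, (forall j, idx j != l) -> coord (mul a y) l = 0.
  move=> y l h; rewrite mulaE csum big1 // => j _; rewrite cZ.
  case: (coord a (idx j) =P 0) => [->|/eqP h1]; first by rewrite !mul0r.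
  case: (coord (sq (idx j)) l =P 0) => [->|/eqP h2]; first by rewrite mulr0.
  have [j' hj'] : exists j', idx j' = l.
    by apply/HB01; right; exists (idx j); split.
  by have := h j'; rewrite hj' eqxx.
pose vec (b : 'cV[F]_m) := \sum_(j < m) b j 0 *: e (idx j).
have V1 : forall b i, coord (vec b) (idx i) = b i 0.
  move=> b i; rewrite csum (bigD1 i) //= big1 ?addr0.
    by rewrite cZ He eqxx mulr1.
  move=> j ji; rewrite cZ He (inj_eq Hidx) eq_sym (negbTE ji) mulr0 //.
have V2 : forall b l, (forall j, idx j != l) -> coord (vec b) l = 0.
  move=> b l h; rewrite csum big1 // => j _; rewrite cZ He.
  by rewrite eq_sym (negbTE (h j)) mulr0.
have yvvec : forall b, yv (vec b) = b.
  by move=> b; apply/matrixP => i j; rewrite !mxE V1 ord1.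
have yv0 : yv 0 = 0 by apply/matrixP => i j; rewrite !mxE c0.
have yvD : forall x y, yv (x + y) = yv x + yv y.
  by move=> x y; apply/matrixP => i j; rewrite !mxE cD.
have yvZ : forall c x, yv (c *: x) = c *: yv x.
  by move=> c x; apply/matrixP => i j; rewrite !mxE cZ.
pose N := M - lam%:M.
pose T y := mul a y - lam *: y.
have TC1 : forall y i, coord (T y) (idx i) = (N *m yv y) i 0.
  by move=> y i; rewrite cB cZ C1 mulmxBl mul_scalar_mx !mxE.
have TC2 : forall y l, (forall j, idx j != l) -> coord (T y) l = - lam * coord y l.
  by move=> y l h; rewrite cB cZ C2 // sub0r mulNr.
pose U := unitz_mul mul.
have UC : forall x y, U x y = U y x.
  move=> [x1 x2] [y1 y2]; rewrite /U /unitz_mul /= [mul x1 y1]mulC mulrC.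
  by rewrite -!addrA (addrC (x2 *: y1)).
have Ua : forall y t, U (a, -lam) (y, t) = (T y + t *: a, - lam * t).
  by move=> y t; rewrite /U /unitz_mul /= scaleNr.
have eigE : eigenvalue M lam = (N \notin unitmx).
  by rewrite /eigenvalue /eigenspace kermx_eq0 row_free_unit.
have nullv : N \notin unitmx -> exists2 b : 'cV_m, N *m b = 0 & b != 0.
  move=> nu; pose K := kermx N^T.
  have KN : K != 0 by rewrite kermx_eq0 row_free_unit unitmx_tr.
  case: (boolP [exists i, row i K != 0]) => [/existsP [i hi]|/existsPn h].
    exists (row i K)^T.
      by rewrite -[N]trmxK -trmx_mul -row_mul mulmx_ker row0 trmx0.
    apply: contra hi => /eqP h; apply/eqP; by rewrite -[row i K]trmxK h trmx0.
  exfalso; move/negP: KN; apply; apply/eqP/row_matrixP => i; rewrite row0.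
  by apply/eqP; move: (h i); rewrite negbK.
have lam0M : lam = 0 -> ~ m_invertible_in U (a, -lam).
  move=> -> [[g _ hg] _]; have := hg (0, 1); case: (g (0, 1)) => y t.
  rewrite /U /unitz_mul /=; case=> _ /eqP; by rewrite oppr0 mul0r eq_sym oner_eq0.
have lam0S : lam = 0 -> ~ invertible_in U (0, 1) (a, -lam).
  move=> -> [_ [[y t]]].
  rewrite /U /unitz_mul /=; case=> _ /eqP; by rewrite oppr0 mul0r eq_sym oner_eq0.
have T0 : T 0 = 0 by rewrite /T mr0 scaler0 subrr.
have K1 : lam != 0 -> (m_invertible_in U (a, -lam) <-> N \in unitmx).
  move=> l0; split.
    move=> [[g fg _] _]; case: (boolP (N \in unitmx)) => // nu.
    have [b Nb bn0] := nullv nu; exfalso.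
    have Tb : T (vec b) = 0.
      apply: zeroP => l; case: (imgP l) => [[i <-]|hl].
        by rewrite TC1 yvvec Nb mxE.
      by rewrite TC2 // V2 // mulr0.
    have E : U (a, -lam) (vec b, 0) = U (a, -lam) (0, 0) by rewrite !Ua Tb T0.
    have := congr1 g E; rewrite !fg; case=> hb.
    by move/negP: bn0; apply; rewrite -(yvvec b) hb yv0.
  move=> nu.
  have Ninj : forall y y', T y = T y' -> y = y'.
    move=> y y' h; apply: eq_coord => l; case: (imgP l) => [[i <-]|hl].
      have : N *m yv y = N *m yv y'.
        by apply/matrixP => i' j'; rewrite ord1 -!TC1 h.
      move/(congr1 (mulmx (invmx N))); rewrite !mulKmx // => /matrixP /(_ i 0).
      by rewrite !mxE.
    have := congr1 (coord^~ l) h; rewrite /= !TC2 //; apply: mulfI.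
    by rewrite oppr_eq0.
  pose Sol c := - lam^-1 *: c + vec (invmx N *m (lam^-1 *: (M *m yv c))).
  have TSol : forall c, T (Sol c) = c.
    move=> c; apply: eq_coord => l; case: (imgP l) => [[i <-]|hl].
      rewrite TC1 /Sol yvD yvZ yvvec mulmxDr mulKVmx // -scalemxAr.
      rewrite /N mulmxBl mul_scalar_mx !mxE; field.
      by [].
    rewrite TC2 // /Sol cD cZ V2 // addr0; field.
    by [].
  pose f := U (a, -lam).
  pose g (z : A * F) := (Sol (z.1 - (- lam^-1 * z.2) *: a), - lam^-1 * z.2).
  have fg : cancel g f.
    move=> [x t]; rewrite /f /g /= Ua TSol subrK; congr pair; field.
    by [].
  have finj : injective f.
    move=> [y t] [y' t']; rewrite /f !Ua; case=> h1 h2.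
    have tt : t = t' by move: h2; apply: mulfI; rewrite oppr_eq0.
    by subst t'; congr pair; apply: Ninj; move: h1; apply: addIr.
  have bf : bijective f.
    by exists g => // z; apply: finj; rewrite fg.
  split; first exact: bf.
  by apply: (eq_bij bf) => z; rewrite /f UC.
have K2 : lam != 0 -> (invertible_in U (0, 1) (a, -lam) <->
    exists b : 'cV[F]_m, N *m b = alpha_col coord a idx).
  move=> l0; split.
    move=> [_ [[y t] h]]; rewrite Ua in h; case: h => h1 h2.
    exists (lam *: yv y); apply/matrixP => i j; rewrite ord1.
    rewrite -scalemxAr [LHS]mxE -TC1 /alpha_col mxE.
    have := congr1 (coord^~ (idx i)) h1; rewrite /= cD cZ c0 => /eqP.
    rewrite addr_eq0 => /eqP ->.
    transitivity ((- lam * t) * coord a (idx i)); first by ring.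
    by rewrite h2 mul1r.
  move=> [b hb].
  have hz : U (a, -lam) (lam^-1 *: vec b, - lam^-1) = (0, 1).
    rewrite Ua; congr pair; last by field.
    apply: zeroP => l; rewrite cD cZ; case: (imgP l) => [[i <-]|hl].
      rewrite TC1 yvZ yvvec -scalemxAr hb /alpha_col !mxE; ring.
    by rewrite TC2 // cZ V2 // aout // !mulr0 addr0.
  split; last by exists (lam^-1 *: vec b, - lam^-1).
  by exists (lam^-1 *: vec b, - lam^-1); rewrite UC.
have MS : m_spectrum mul a lam <-> ~ m_invertible_in U (a, -lam).
  split; first by case => [[u [hu _]]|[_ h]] //; exfalso; exact: noUnit hu.
  by move=> h; right; split.
have SP : spectrum mul a lam <-> ~ invertible_in U (0, 1) (a, -lam).
  split; first by case => [[u [hu _]]|[_ h]] //; exfalso; exact: noUnit hu.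
  by move=> h; right; split.
split; [|split].
- rewrite MS eigE; split.
    move=> h; case: (lam =P 0) => [->|/eqP l0]; [by left | right].
    by apply/negP => nu; apply: h; apply/(K1 l0).
  case=> [l0|nu]; first exact: lam0M.
  case: (lam =P 0) => [l0|/eqP l0]; first exact: lam0M.
  by move/(K1 l0) => hu; rewrite hu in nu.
- rewrite SP; split.
    move=> h; case: (lam =P 0) => [->|/eqP l0]; [by left | right].
    by move=> hb; apply: h; apply/(K2 l0).
  case=> [l0|hnb]; first exact: lam0S.
  case: (lam =P 0) => [l0|/eqP l0]; first exact: lam0S.
  by move/(K2 l0) => h; apply: hnb.
- move=> /SP hs; apply/MS; case: (lam =P 0) => [l0|/eqP l0]; first exact: lam0M.
  move/(K1 l0) => hu; apply: hs; apply/(K2 l0).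
  by exists (invmx N *m alpha_col coord a idx); rewrite mulKVmx.
Qed.
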